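(* Let $\Omega$ be an infinite set, $G$ a subgroup of $S=\mathrm{Sym}(\Omega)$, and $\Gamma\subseteq\Omega$ a subset such that $|\Omega|^{|\Gamma|}\le|\Omega|$ (e.g., $\Gamma$ finite). Then $G_{(\Gamma)}\approx_{|\Omega|^+}G$.
   Context: $\mathrm{Sym}(\Omega)$ is the group of all permutations of $\Omega$. $G_{(\Gamma)}=\{g\in G:\gamma g=\gamma\ \forall\gamma\in\Gamma\}$. $|\Omega|^+$ is the successor cardinal of $|\Omega|$. For an infinite cardinal $\kappa$ and subgroups $G_1,G_2\le S$, $G_1\preccurlyeq_\kappa G_2$ means there exists $U\subseteq S$ with $|U|<\kappa$ and $G_1\le\langle G_2\cup U\rangle$; $G_1\approx_\kappa G_2$ means $G_1\preccurlyeq_\kappa G_2$ and $G_2\preccurlyeq_\kappa G_1$. *)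

(* Defs.v *)
Set Implicit Arguments.

Section Defs.
Variable Omega : Type.

Definition is_perm (f : Omega -> Omega) : Prop :=
  exists g : Omega -> Omega, (forall x, g (f x) = x) /\ (forall x, f (g x) = x).

Definition is_subgroup (G : (Omega -> Omega) -> Prop) : Prop :=
  (forall f, G f -> is_perm f) /\
  G (fun x => x) /\
  (forall f g, G f -> G g -> G (fun x => g (f x))) /\
  (forall f g, G f -> (forall x, g (f x) = x) -> (forall x, f (g x) = x) -> G g).

Definition gen (X : (Omega -> Omega) -> Prop) (f : Omega -> Omega) : Prop :=
  forall H, is_subgroup H -> (forall h, X h -> H h) -> H f.

Definition pstab (G : (Omega -> Omega) -> Prop) (Gamma : Omega -> Prop)
  (f : Omega -> Omega) : Prop :=
  G f /\ (forall x, Gamma x -> f x = x).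

Definition card_le_Omega (X : Type) (A : X -> Prop) : Prop :=
  exists i : {x : X | A x} -> Omega, forall a b, i a = i b -> a = b.

(* G1 <=_kappa G2 with kappa = |Omega|^+, i.e. |U| < |Omega|^+ iff |U| <= |Omega| *)
Definition prec_succ (G1 G2 : (Omega -> Omega) -> Prop) : Prop :=
  exists U : (Omega -> Omega) -> Prop,
    (forall u, U u -> is_perm u) /\
    card_le_Omega U /\
    (forall f, G1 f -> gen (fun h => G2 h \/ U h) f).

Definition approx_succ (G1 G2 : (Omega -> Omega) -> Prop) : Prop :=
  prec_succ G1 G2 /\ prec_succ G2 G1.

Definition infinite_type : Prop :=
  exists i : nat -> Omega, forall m n, i m = i n -> m = n.

Definition pow_le (Gamma : Omega -> Prop) : Prop :=
  exists i : ({x : Omega | Gamma x} -> Omega) -> Omega,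
    forall a b, i a = i b -> a = b.
End Defs.

(* Main.v *)
Require Import Defs.
From Stdlib Require Import ClassicalEpsilon FunctionalExtensionality ProofIrrelevance.

Theorem lemma2p2 (Omega : Type) (G : (Omega -> Omega) -> Prop)
  (Gamma : Omega -> Prop) :
  infinite_type Omega ->
  is_subgroup G ->
  pow_le Gamma ->
  approx_succ (pstab G Gamma) G.
Proof.
  intros _ [Gp [Gid [Gc Gi]]] [i Hi].
  split.
  - exists (fun _ => False). split; [intros u []|split].
    + exists (fun a => False_rect Omega (proj2_sig a)). intros [a []].
    + intros f [Gf _] H HH Hsub. apply Hsub. left. exact Gf.
  - set (restr := fun (u : Omega -> Omega) (x : {x : Omega | Gamma x}) => u (proj1_sig x)).
    set (P := fun r v => G v /\ restr v = r).
    set (ch := fun r => epsilon (inhabits (fun x : Omega => x)) (P r)).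
    exists (fun u => G u /\ u = ch (restr u)).
    split; [intros u [Gu _]; exact (Gp u Gu)|split].
    + exists (fun a => i (restr (proj1_sig a))).
      intros [a [Ga Ea]] [b [Gb Eb]] E. simpl in E.
      apply Hi in E.
      assert (a = b) by (rewrite Ea, Eb, E; reflexivity).
      subst b. f_equal. apply proof_irrelevance.
    + intros g Gg H HH Hsub.
      assert (Pr : P (restr g) (ch (restr g))).
      { apply epsilon_spec. exists g. split; auto. }
      set (r := ch (restr g)) in *. destruct Pr as [Gr Er].
      assert (Ur : G r /\ r = ch (restr r)) by (rewrite Er; split; auto).
      destruct (Gp r Gr) as [rinv [H1 H2]].
      assert (Gri : G rinv) by (apply (Gi r rinv); auto).
      assert (Gh : G (fun x => rinv (g x))) by (apply Gc; auto).
      assert (Hh : H (fun x => rinv (g x))).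
      { apply Hsub. left. split; auto. intros x Gx.
        assert (e := f_equal (fun f => f (exist _ x Gx)) Er). unfold restr in e; simpl in e.
        rewrite <- e. apply H1. }
      assert (Hr : H r) by (apply Hsub; right; exact Ur).
      destruct HH as [_ [_ [Hc _]]].
      assert (Hg := Hc _ _ Hh Hr). simpl in Hg.
      replace g with (fun x => r (rinv (g x))); [exact Hg|].
      apply functional_extensionality. intros x. apply H2.
Qed.
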